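(* Let $\varphi$ be an arithmetic formula (set parameters allowed). Then \[ \mathrm{ACA}_0\vdash{\tt wo}(\Lambda)\to\forall\lambda\in|\Lambda|\,\big(\widehat{\tt TR}^\Lambda_\lambda(\varphi,X)\leftrightarrow{\tt TR}^\Lambda_\lambda(\varphi,X)\big). \]
   Context: Second-order arithmetic with $0,1,+,\times$, exponentiation, $<,=,\in$; $\mathrm{ACA}_0=\mathrm Q+{\tt Ind}+$arithmetic comprehension. A set $\Lambda$ codes $(|\Lambda|,<_\Lambda)$; ${\tt wo}(\Lambda)$ states it is a linear order on $|\Lambda|$ with every nonempty subset having a least element. $\langle\cdot,\cdot\rangle$ is pairing with projections $(x)_0,(x)_1$; $Y_\xi=\{x:\langle\xi,x\rangle\in Y\}$. For a formula $\varphi(x,Y)$ with recursion variable $Y$, $\varphi(x,Y_{<\lambda})$ replaces each atom $t\in Y$ by $(t)_0<_\Lambda\lambda\wedge t\in Y$. ${\tt TR}^\Lambda_\lambda(\varphi,Y)$ is $\forall\xi\le_\Lambda\lambda\,\forall x(x\in Y_\xi\leftrightarrow\varphi(x,Y_{<\xi}))$. $\widehat{\tt TR}^\Lambda_\lambda(\varphi,X)$ is $\forall x\big((x)_0\le_\Lambda\lambda\to[x\in X\leftrightarrow\forall Y({\tt TR}^\Lambda_{(x)_0}(\varphi,Y)\to\varphi((x)_1,Y_{<(x)_0}))]\big)$. *)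

(* Defs.v *)
(* Semantic rendering of "ACA_0 |- ...":
   truth in every (Henkin, i.e. general two-sorted) model of ACA_0, for all
   values of the free variables. *)

Inductive term : Type :=
  | tvar  : nat -> term           (* number variable (de Bruijn index) *)
  | tzero : term
  | tone  : term
  | tadd  : term -> term -> term
  | tmul  : term -> term -> term
  | texp  : term -> term -> term.

Inductive form : Type :=
  | fEq  : term -> term -> form
  | fLt  : term -> term -> form
  | fMem : term -> nat -> form
  | fNeg : form -> form
  | fAnd : form -> form -> form
  | fOr  : form -> form -> form
  | fImp : form -> form -> form
  | fAll : form -> form           (* binds number variable 0 *)
  | fEx  : form -> form.

Definition scons {A : Type} (a : A) (e : nat -> A) : nat -> A :=
  fun n => match n with 0 => a | S k => e k end.

Record structure : Type := {
  N : Type;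
  St : Type;
  zero : N;  one : N;
  add : N -> N -> N;  mul : N -> N -> N;  exp : N -> N -> N;
  lt : N -> N -> Prop;
  mem : N -> St -> Prop
}.

Section Eval.
Variable M : structure.

Fixpoint teval (e : nat -> N M) (t : term) : N M :=
  match t with
  | tvar n => e n
  | tzero => zero M
  | tone => one M
  | tadd a b => add M (teval e a) (teval e b)
  | tmul a b => mul M (teval e a) (teval e b)
  | texp a b => exp M (teval e a) (teval e b)
  end.

(* Satisfaction; set variables are interpreted by predicates on numbers
   (an environment value (fun n => mem n Z) for Z : St is an actual set). *)
Fixpoint feval (e : nat -> N M) (s : nat -> (N M -> Prop)) (f : form) : Prop :=
  match f with
  | fEq a b => teval e a = teval e b
  | fLt a b => lt M (teval e a) (teval e b)
  | fMem a n => s n (teval e a)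
  | fNeg g => ~ feval e s g
  | fAnd g h => feval e s g /\ feval e s h
  | fOr g h => feval e s g \/ feval e s h
  | fImp g h => feval e s g -> feval e s h
  | fAll g => forall x : N M, feval (scons x e) s g
  | fEx g => exists x : N M, feval (scons x e) s g
  end.

Definition setenv (ps : nat -> St M) : nat -> (N M -> Prop) :=
  fun i n => mem M n (ps i).
End Eval.

Definition is_ACA0 (M : structure) : Prop :=
  let N0 := zero M in let N1 := one M in
  let ad := add M in let mu := mul M in let ex := exp M in
  (forall x, ad x N1 <> N0) /\
  (forall x y, ad x N1 = ad y N1 -> x = y) /\
  (forall x, x = N0 \/ exists y, x = ad y N1) /\
  (forall x, ad x N0 = x) /\
  (forall x y, ad x (ad y N1) = ad (ad x y) N1) /\
  (forall x, mu x N0 = N0) /\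
  (forall x y, mu x (ad y N1) = ad (mu x y) x) /\
  (forall x, ex x N0 = N1) /\
  (forall x y, ex x (ad y N1) = mu (ex x y) x) /\
  (forall x y, lt M x y <-> exists z, ad x (ad z N1) = y) /\
  (forall X : St M, mem M N0 X ->
     (forall n, mem M n X -> mem M (ad n N1) X) -> forall n, mem M n X) /\
  (forall (f : form) (e : nat -> N M) (ps : nat -> St M),
     exists Z : St M, forall n,
       mem M n Z <-> feval M (scons n e) (setenv M ps) f).

Section Notions.
Variable M : structure.

(* Cantor pairing:  c = <a,b>  iff  2c = (a+b)(a+b+1) + 2a.
   (x)_0 = a, (x)_1 = b  iff  pairR a b x. *)
Definition pairR (a b c : N M) : Prop :=
  add M c c = add M (mul M (add M a b) (add M (add M a b) (one M))) (add M a a).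

(* Lambda codes |Lambda| = Lambda_0 and x <_Lambda y iff <x,y> in Lambda_1. *)
Definition inField (L : St M) (x : N M) : Prop :=
  exists c, pairR (zero M) x c /\ mem M c L.

Definition ltL (L : St M) (x y : N M) : Prop :=
  exists p c, pairR x y p /\ pairR (one M) p c /\ mem M c L.

Definition leL (L : St M) (x y : N M) : Prop := ltL L x y \/ x = y.

Definition wo (L : St M) : Prop :=
  (forall x y, ltL L x y -> inField L x /\ inField L y) /\
  (forall x, inField L x -> ~ ltL L x x) /\
  (forall x y z, ltL L x y -> ltL L y z -> ltL L x z) /\
  (forall x y, inField L x -> inField L y -> ltL L x y \/ x = y \/ ltL L y x) /\
  (forall Z : St M, (exists x, inField L x /\ mem M x Z) ->
     exists x, inField L x /\ mem M x Z /\
       forall y, inField L y -> mem M y Z -> leL L x y).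

Definition slice (Y : St M) (xi x : N M) : Prop :=
  exists c, pairR xi x c /\ mem M c Y.

(* interpretation of the atom  t \in Y  in  phi(x, Y_{<lam}) :
   (t)_0 <_Lambda lam /\ t \in Y *)
Definition restr (L : St M) (lam : N M) (Y : St M) : N M -> Prop :=
  fun t => (exists a b, pairR a b t /\ ltL L a lam) /\ mem M t Y.

(* phi(x, P): number variable 0 is x, set variable 0 is Y (here P),
   set variables 1,2,... are the set parameters ps, number variables
   1,2,... are the number parameters e. *)
Definition phiE (phi : form) (e : nat -> N M) (ps : nat -> St M)
  (x : N M) (P : N M -> Prop) : Prop :=
  feval M (scons x e) (scons P (setenv M ps)) phi.

Definition TR (phi : form) (e : nat -> N M) (ps : nat -> St M)
  (L : St M) (lam : N M) (Y : St M) : Prop :=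
  forall xi, leL L xi lam ->
    forall x, slice Y xi x <-> phiE phi e ps x (restr L xi Y).

Definition hatTR (phi : form) (e : nat -> N M) (ps : nat -> St M)
  (L : St M) (lam : N M) (X : St M) : Prop :=
  forall x a b, pairR a b x -> leL L a lam ->
    (mem M x X <->
       forall Y : St M, TR phi e ps L a Y -> phiE phi e ps b (restr L a Y)).
End Notions.

(* Main.v *)
Require Import Defs.
From Stdlib Require Import Ring Setoid Classical Lia PeanoNat.

Section Arith.
Variable M : structure.
Hypothesis HM : is_ACA0 M.
Variable S0 : St M.

Local Infix "⊕" := (add M) (at level 50, left associativity).
Local Infix "⊗" := (mul M) (at level 40, left associativity).
Local Notation a0 := (zero M).
Local Notation a1 := (one M).

Lemma q1 x : x ⊕ a1 <> a0. Proof. destruct HM as (h&_). apply h. Qed.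
Lemma q2 x y : x ⊕ a1 = y ⊕ a1 -> x = y. Proof. destruct HM as (_&h&_). apply h. Qed.
Lemma q3 x : x = a0 \/ exists y, x = y ⊕ a1. Proof. destruct HM as (_&_&h&_). apply h. Qed.
Lemma q4 x : x ⊕ a0 = x. Proof. destruct HM as (_&_&_&h&_). apply h. Qed.
Lemma q5 x y : x ⊕ (y ⊕ a1) = (x ⊕ y) ⊕ a1. Proof. destruct HM as (_&_&_&_&h&_). apply h. Qed.
Lemma q6 x : x ⊗ a0 = a0. Proof. destruct HM as (_&_&_&_&_&h&_). apply h. Qed.
Lemma q7 x y : x ⊗ (y ⊕ a1) = x ⊗ y ⊕ x. Proof. destruct HM as (_&_&_&_&_&_&h&_). apply h. Qed.
Lemma qind (X : St M) : mem M a0 X -> (forall n, mem M n X -> mem M (n ⊕ a1) X) -> forall n, mem M n X.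
Proof. destruct HM as (_&_&_&_&_&_&_&_&_&_&h&_). apply h. Qed.
Lemma qcomp (f : form) (e : nat -> N M) (ps : nat -> St M) :
  exists Z : St M, forall n, mem M n Z <-> feval M (scons n e) (setenv M ps) f.
Proof. destruct HM as (_&_&_&_&_&_&_&_&_&_&_&h). apply h. Qed.

Lemma ind_P (P : N M -> Prop) f e ps :
  (forall n, feval M (scons n e) (setenv M ps) f <-> P n) ->
  P a0 -> (forall n, P n -> P (n ⊕ a1)) -> forall n, P n.
Proof.
  intros HP H0 HS. destruct (qcomp f e ps) as [Z HZ].
  assert (H : forall n, mem M n Z).
  { apply qind. apply HZ, HP, H0. intros n Hn. apply HZ, HP, HS, HP, HZ, Hn. }
  intro n; apply HP, HZ, H.
Qed.

Definition e0 : nat -> N M := fun _ => a0.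
Definition ps0 : nat -> St M := fun _ => S0.

Lemma add0l x : a0 ⊕ x = x.
Proof.
  apply (ind_P (fun x => a0 ⊕ x = x) (fEq (tadd tzero (tvar 0)) (tvar 0)) e0 ps0).
  - intro; simpl; tauto.
  - apply q4.
  - intros n H. rewrite q5, H. reflexivity.
Qed.

Lemma addA x y z : x ⊕ (y ⊕ z) = (x ⊕ y) ⊕ z.
Proof.
  revert z.
  apply (ind_P (fun z => x ⊕ (y ⊕ z) = (x ⊕ y) ⊕ z)
    (fEq (tadd (tvar 1) (tadd (tvar 2) (tvar 0))) (tadd (tadd (tvar 1) (tvar 2)) (tvar 0)))
    (scons x (scons y e0)) ps0).
  - intro; simpl; tauto.
  - rewrite !q4. reflexivity.
  - intros n H. rewrite !q5, H. reflexivity.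
Qed.

Lemma addSl y x : (y ⊕ a1) ⊕ x = (y ⊕ x) ⊕ a1.
Proof.
  revert x.
  apply (ind_P (fun x => (y ⊕ a1) ⊕ x = (y ⊕ x) ⊕ a1)
    (fEq (tadd (tadd (tvar 1) tone) (tvar 0)) (tadd (tadd (tvar 1) (tvar 0)) tone))
    (scons y e0) ps0).
  - intro; simpl; tauto.
  - rewrite !q4. reflexivity.
  - intros n H. rewrite !q5, H. reflexivity.
Qed.

Lemma addC x y : x ⊕ y = y ⊕ x.
Proof.
  revert y.
  apply (ind_P (fun y => x ⊕ y = y ⊕ x)
    (fEq (tadd (tvar 1) (tvar 0)) (tadd (tvar 0) (tvar 1))) (scons x e0) ps0).
  - intro; simpl; tauto.
  - rewrite q4, add0l. reflexivity.
  - intros n H. rewrite q5, H, addSl. reflexivity.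
Qed.

Lemma mul0l x : a0 ⊗ x = a0.
Proof.
  apply (ind_P (fun x => a0 ⊗ x = a0) (fEq (tmul tzero (tvar 0)) tzero) e0 ps0).
  - intro; simpl; tauto.
  - apply q6.
  - intros n H. rewrite q7, H, q4. reflexivity.
Qed.

Lemma distrL x y z : x ⊗ (y ⊕ z) = x ⊗ y ⊕ x ⊗ z.
Proof.
  revert z.
  apply (ind_P (fun z => x ⊗ (y ⊕ z) = x ⊗ y ⊕ x ⊗ z)
    (fEq (tmul (tvar 1) (tadd (tvar 2) (tvar 0))) (tadd (tmul (tvar 1) (tvar 2)) (tmul (tvar 1) (tvar 0))))
    (scons x (scons y e0)) ps0).
  - intro; simpl; tauto.
  - rewrite q4, q6, q4. reflexivity.
  - intros n H. rewrite q5, !q7, H, addA. reflexivity.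
Qed.

Lemma mulA x y z : x ⊗ (y ⊗ z) = (x ⊗ y) ⊗ z.
Proof.
  revert z.
  apply (ind_P (fun z => x ⊗ (y ⊗ z) = (x ⊗ y) ⊗ z)
    (fEq (tmul (tvar 1) (tmul (tvar 2) (tvar 0))) (tmul (tmul (tvar 1) (tvar 2)) (tvar 0)))
    (scons x (scons y e0)) ps0).
  - intro; simpl; tauto.
  - rewrite !q6. reflexivity.
  - intros n H. rewrite !q7, distrL, H. reflexivity.
Qed.

Lemma mulSl y x : (y ⊕ a1) ⊗ x = y ⊗ x ⊕ x.
Proof.
  revert x.
  apply (ind_P (fun x => (y ⊕ a1) ⊗ x = y ⊗ x ⊕ x)
    (fEq (tmul (tadd (tvar 1) tone) (tvar 0)) (tadd (tmul (tvar 1) (tvar 0)) (tvar 0)))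
    (scons y e0) ps0).
  - intro; simpl; tauto.
  - rewrite !q6, q4. reflexivity.
  - intros n H. rewrite !q7, H.
    rewrite !q5. f_equal. rewrite <- !addA. f_equal. apply addC.
Qed.

Lemma mulC x y : x ⊗ y = y ⊗ x.
Proof.
  revert y.
  apply (ind_P (fun y => x ⊗ y = y ⊗ x)
    (fEq (tmul (tvar 1) (tvar 0)) (tmul (tvar 0) (tvar 1))) (scons x e0) ps0).
  - intro; simpl; tauto.
  - rewrite q6, mul0l. reflexivity.
  - intros n H. rewrite q7, H, mulSl. reflexivity.
Qed.

Lemma srth : semi_ring_theory a0 a1 (add M) (mul M) (@eq (N M)).
Proof.
  constructor.
  - exact add0l.
  - exact addC.
  - exact addA.
  - intro x. rewrite <- (add0l a1), mulSl, mul0l, add0l. reflexivity.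
  - exact mul0l.
  - exact mulC.
  - exact mulA.
  - intros n m p. rewrite (mulC (n ⊕ m)), distrL, !(mulC p). reflexivity.
Qed.

Add Ring RM : srth.

Lemma addcancel z x y : x ⊕ z = y ⊕ z -> x = y.
Proof.
  revert z x y.
  apply (ind_P (fun z => forall x y, x ⊕ z = y ⊕ z -> x = y)
    (fAll (fAll (fImp (fEq (tadd (tvar 1) (tvar 2)) (tadd (tvar 0) (tvar 2))) (fEq (tvar 1) (tvar 0)))))
    e0 ps0).
  - intro; simpl; tauto.
  - intros x y. rewrite !q4. auto.
  - intros n H x y Hxy. apply H, q2. rewrite <- !q5. exact Hxy.
Qed.

Lemma neqS u v : u ⊕ (v ⊕ a1) <> u.
Proof.
  intro H. apply (q1 v). apply (addcancel u). rewrite add0l, addC. exact H.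
Qed.

Lemma trich y x : (exists k, x ⊕ (k ⊕ a1) = y) \/ x = y \/ (exists k, y ⊕ (k ⊕ a1) = x).
Proof.
  revert y.
  apply (ind_P (fun y => (exists k, x ⊕ (k ⊕ a1) = y) \/ x = y \/ (exists k, y ⊕ (k ⊕ a1) = x))
    (fOr (fEx (fEq (tadd (tvar 2) (tadd (tvar 0) tone)) (tvar 1)))
      (fOr (fEq (tvar 1) (tvar 0)) (fEx (fEq (tadd (tvar 1) (tadd (tvar 0) tone)) (tvar 2)))))
    (scons x e0) ps0).
  - intro; simpl; tauto.
  - destruct (q3 x) as [->|[w ->]]; [tauto|]. right; right. exists w. ring.
  - intros n [[k Hk]|[H|[k Hk]]].
    + left. exists (k ⊕ a1). rewrite <- Hk. ring.
    + left. exists a0. rewrite <- H. ring.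
    + destruct (q3 k) as [->|[j ->]].
      * right; left. rewrite <- Hk. ring.
      * right; right. exists j. rewrite <- Hk. ring.
Qed.

Lemma double_inj x y : x ⊕ x = y ⊕ y -> x = y.
Proof.
  intro H. destruct (trich y x) as [[k Hk]|[E|[k Hk]]]; auto; exfalso.
  - subst y. apply (neqS (x ⊕ x) (k ⊕ k ⊕ a1)).
    transitivity ((x ⊕ (k ⊕ a1)) ⊕ (x ⊕ (k ⊕ a1))); [ring|symmetry; exact H].
  - subst x. apply (neqS (y ⊕ y) (k ⊕ k ⊕ a1)).
    transitivity ((y ⊕ (k ⊕ a1)) ⊕ (y ⊕ (k ⊕ a1))); [ring|exact H].
Qed.

Lemma even s : exists h, h ⊕ h = s ⊗ (s ⊕ a1).
Proof.
  revert s.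
  apply (ind_P (fun s => exists h, h ⊕ h = s ⊗ (s ⊕ a1))
    (fEx (fEq (tadd (tvar 0) (tvar 0)) (tmul (tvar 1) (tadd (tvar 1) tone)))) e0 ps0).
  - intro; simpl; tauto.
  - exists a0. ring.
  - intros s [h H]. exists (h ⊕ (s ⊕ a1)).
    transitivity ((h ⊕ h) ⊕ (s ⊕ a1) ⊕ (s ⊕ a1)); [ring|]. rewrite H. ring.
Qed.

Lemma pair_ex a b : exists c, pairR M a b c.
Proof.
  destruct (even (a ⊕ b)) as [h H]. exists (h ⊕ a). unfold pairR.
  transitivity ((h ⊕ h) ⊕ (a ⊕ a)); [ring|]. rewrite H. reflexivity.
Qed.

Lemma pair_fun a b c c' : pairR M a b c -> pairR M a b c' -> c = c'.
Proof. unfold pairR. intros H1 H2. apply double_inj. congruence. Qed.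

Lemma pair_nlt a b a' b' c : pairR M a b c -> pairR M a' b' c ->
  ~ exists k, (a ⊕ b) ⊕ (k ⊕ a1) = a' ⊕ b'.
Proof.
  unfold pairR. intros H1 H2 [k Hk]. rewrite <- Hk in H2.
  set (W := (k ⊕ k) ⊗ a ⊕ ((k ⊕ a1) ⊕ (k ⊕ a1)) ⊗ b ⊕ k ⊗ k ⊕ (k ⊕ k ⊕ k) ⊕ a1 ⊕ (a' ⊕ a')).
  assert (E : ((a ⊕ b) ⊗ ((a ⊕ b) ⊕ a1) ⊕ (a ⊕ a)) ⊕ (W ⊕ a1) =
     (a ⊕ b ⊕ (k ⊕ a1)) ⊗ (a ⊕ b ⊕ (k ⊕ a1) ⊕ a1) ⊕ (a' ⊕ a')) by (unfold W; ring).
  rewrite <- H1, <- H2 in E. exact (neqS _ _ E).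
Qed.

Lemma pair_inj a b a' b' c : pairR M a b c -> pairR M a' b' c -> a = a' /\ b = b'.
Proof.
  intros H1 H2.
  assert (Hs : a ⊕ b = a' ⊕ b').
  { destruct (trich (a' ⊕ b') (a ⊕ b)) as [Hl|[E|Hr]]; auto; exfalso.
    - exact (pair_nlt _ _ _ _ _ H1 H2 Hl).
    - exact (pair_nlt _ _ _ _ _ H2 H1 Hr). }
  unfold pairR in *. rewrite <- Hs in H2. rewrite H1 in H2.
  rewrite (addC _ (a ⊕ a)), (addC _ (a' ⊕ a')) in H2.
  apply addcancel, double_inj in H2. subst a'. split; auto.
  apply (addcancel a). rewrite !(addC _ a). exact Hs.
Qed.


Lemma teval_ext e1 e2 t : (forall i, e1 i = e2 i) -> teval M e1 t = teval M e2 t.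
Proof. intro H; induction t; simpl; congruence. Qed.

Lemma feval_ext f : forall e1 e2 s1 s2, (forall i, e1 i = e2 i) -> (forall i n, s1 i n <-> s2 i n) ->
  (feval M e1 s1 f <-> feval M e2 s2 f).
Proof.
  induction f; intros e1 e2 s1 s2 He Hs; simpl.
  - rewrite !(teval_ext e1 e2) by auto. tauto.
  - rewrite !(teval_ext e1 e2) by auto. tauto.
  - rewrite !(teval_ext e1 e2) by auto. apply Hs.
  - rewrite (IHf e1 e2 s1 s2) by auto. tauto.
  - rewrite (IHf1 e1 e2 s1 s2), (IHf2 e1 e2 s1 s2) by auto. tauto.
  - rewrite (IHf1 e1 e2 s1 s2), (IHf2 e1 e2 s1 s2) by auto. tauto.
  - rewrite (IHf1 e1 e2 s1 s2), (IHf2 e1 e2 s1 s2) by auto. tauto.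
  - split; intros H x; [rewrite <- (IHf (scons x e1) (scons x e2) s1 s2)|rewrite (IHf (scons x e1) (scons x e2) s1 s2)]; auto;
      intros [|i]; simpl; auto.
  - split; intros [x H]; exists x; [rewrite <- (IHf (scons x e1) (scons x e2) s1 s2)|rewrite (IHf (scons x e1) (scons x e2) s1 s2)]; auto;
      intros [|i]; simpl; auto.
Qed.

Fixpoint tmap (g : nat -> nat) (t : term) : term :=
  match t with
  | tvar n => tvar (g n)
  | tzero => tzero
  | tone => tone
  | tadd a b => tadd (tmap g a) (tmap g b)
  | tmul a b => tmul (tmap g a) (tmap g b)
  | texp a b => texp (tmap g a) (tmap g b)
  end.

Lemma tmap_eval g e t : teval M e (tmap g t) = teval M (fun i => e (g i)) t.
Proof. induction t; simpl; congruence. Qed.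

Definition tsh := tmap S.
Lemma teval_tsh x e t : teval M (scons x e) (tsh t) = teval M e t.
Proof. unfold tsh. rewrite tmap_eval. apply teval_ext. reflexivity. Qed.

Definition fpair a b c := fEq (tadd c c) (tadd (tmul (tadd a b) (tadd (tadd a b) tone)) (tadd a a)).
Lemma fpair_ok e s a b c : feval M e s (fpair a b c) <-> pairR M (teval M e a) (teval M e b) (teval M e c).
Proof. simpl. reflexivity. Qed.

Definition fltL (i : nat) a b :=
  fEx (fEx (fAnd (fpair (tsh (tsh a)) (tsh (tsh b)) (tvar 1)) (fAnd (fpair tone (tvar 1) (tvar 0)) (fMem (tvar 0) i)))).
Lemma fltL_ok e ps i a b : feval M e (setenv M ps) (fltL i a b) <-> ltL M (ps i) (teval M e a) (teval M e b).
Proof.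
  unfold fltL, ltL. simpl. unfold setenv.
  split; intros [p [c H]]; exists p, c; rewrite !teval_tsh in *; exact H.
Qed.

Definition fslice (i : nat) xi x := fEx (fAnd (fpair (tsh xi) (tsh x) (tvar 0)) (fMem (tvar 0) i)).
Lemma fslice_ok e ps i xi x : feval M e (setenv M ps) (fslice i xi x) <-> slice M (ps i) (teval M e xi) (teval M e x).
Proof.
  unfold fslice, slice. simpl. unfold setenv.
  split; intros [c H]; exists c; rewrite !teval_tsh in *; exact H.
Qed.

Definition frestr (iX iL : nat) t u :=
  fAnd (fEx (fEx (fAnd (fpair (tvar 1) (tvar 0) (tsh (tsh t))) (fltL iL (tvar 1) (tsh (tsh u)))))) (fMem t iX).
Lemma frestr_ok e ps iX iL t u : feval M e (setenv M ps) (frestr iX iL t u) <->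
  restr M (ps iL) (teval M e u) (ps iX) (teval M e t).
Proof.
  unfold frestr, restr.
  change (feval M e (setenv M ps) (fAnd ?A ?B)) with (feval M e (setenv M ps) A /\ feval M e (setenv M ps) B).
  change (feval M e (setenv M ps) (fEx ?A)) with (exists a, feval M (scons a e) (setenv M ps) A).
  change (feval M e (setenv M ps) (fMem t iX)) with (mem M (teval M e t) (ps iX)).
  split; intros [[a [b H]] H3]; (split; [exists a, b | exact H3]);
    change (feval M (scons b (scons a e)) (setenv M ps) (fAnd ?A ?B)) with
      (feval M (scons b (scons a e)) (setenv M ps) A /\ feval M (scons b (scons a e)) (setenv M ps) B) in *;
    rewrite fpair_ok, fltL_ok in *; rewrite !teval_tsh in *; simpl in *; auto.
Qed.

Definition fiff A B := fAnd (fImp A B) (fImp B A).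
Lemma fiff_ok e s A B : feval M e s (fiff A B) <-> (feval M e s A <-> feval M e s B).
Proof. simpl. tauto. Qed.

Definition cut (d : nat) (i : nat) : nat := if Nat.leb i d then i else S i.
Definition tl d := tmap (cut d).

Fixpoint trans (d : nat) (f : form) : form :=
  match f with
  | fEq a b => fEq (tl d a) (tl d b)
  | fLt a b => fLt (tl d a) (tl d b)
  | fMem t 0 => frestr 0 1 (tl d t) (tvar (S d))
  | fMem t (S j) => fMem (tl d t) (S (S j))
  | fNeg g => fNeg (trans d g)
  | fAnd g h => fAnd (trans d g) (trans d h)
  | fOr g h => fOr (trans d g) (trans d h)
  | fImp g h => fImp (trans d g) (trans d h)
  | fAll g => fAll (trans (S d) g)
  | fEx g => fEx (trans (S d) g)
  end.

Definition ins (d : nat) (v : N M) (env : nat -> N M) : nat -> N M :=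
  fun i => if Nat.leb i d then env i else if Nat.eqb i (S d) then v else env (pred i).

Lemma teval_tl d v env t : teval M (ins d v env) (tl d t) = teval M env t.
Proof.
  unfold tl. rewrite tmap_eval. apply teval_ext. intro i. unfold ins, cut.
  destruct (Nat.leb i d) eqn:E.
  - rewrite E. reflexivity.
  - destruct (Nat.leb (S i) d) eqn:E2.
    + apply PeanoNat.Nat.leb_le in E2. apply PeanoNat.Nat.leb_gt in E. exfalso. lia.
    + destruct (Nat.eqb (S i) (S d)) eqn:E3.
      * apply PeanoNat.Nat.eqb_eq in E3. apply PeanoNat.Nat.leb_gt in E. exfalso. lia.
      * reflexivity.
Qed.

Lemma ins_scons d v env x i : scons x (ins d v env) i = ins (S d) v (scons x env) i.
Proof.
  destruct i as [|j]; [reflexivity|]. unfold ins. simpl.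
  destruct (Nat.leb j d) eqn:E; [reflexivity|].
  destruct (Nat.eqb j (S d)) eqn:E2; [reflexivity|].
  destruct j as [|j']; [discriminate|reflexivity].
Qed.

Lemma trans_ok f : forall d env ps X L v,
  feval M (ins d v env) (setenv M (scons X (scons L ps))) (trans d f) <->
  feval M env (scons (restr M L v X) (setenv M ps)) f.
Proof.
  induction f; intros d env ps X L v; simpl.
  - rewrite !teval_tl. tauto.
  - rewrite !teval_tl. tauto.
  - destruct n as [|j].
    + rewrite frestr_ok. simpl. rewrite teval_tl.
      unfold ins at 1. rewrite (proj2 (PeanoNat.Nat.leb_gt (S d) d)) by lia.
      rewrite PeanoNat.Nat.eqb_refl. tauto.
    + simpl. unfold setenv. simpl. rewrite teval_tl. tauto.
  - rewrite IHf. tauto.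
  - rewrite IHf1, IHf2. tauto.
  - rewrite IHf1, IHf2. tauto.
  - rewrite IHf1, IHf2. tauto.
  - assert (HE : forall x g, feval M (scons x (ins d v env)) (setenv M (scons X (scons L ps))) g <->
                feval M (ins (S d) v (scons x env)) (setenv M (scons X (scons L ps))) g).
    { intros x g. apply feval_ext; [apply ins_scons | tauto]. }
    split; intros H x; specialize (H x).
    + rewrite HE, IHf in H. exact H.
    + rewrite HE, IHf. exact H.
  - assert (HE : forall x g, feval M (scons x (ins d v env)) (setenv M (scons X (scons L ps))) g <->
                feval M (ins (S d) v (scons x env)) (setenv M (scons X (scons L ps))) g).
    { intros x g. apply feval_ext; [apply ins_scons | tauto]. }
    split; intros [x H]; exists x.
    + rewrite HE, IHf in H. exact H.
    + rewrite HE, IHf. exact H.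
Qed.


Section WO.
Variable L : St M.
Hypothesis Hwo : wo M L.

Lemma lt_fieldl x y : ltL M L x y -> inField M L x.
Proof. destruct Hwo as (h&_). intro H; apply (h _ _ H). Qed.
Lemma lt_irr x : ~ ltL M L x x.
Proof. destruct Hwo as (h1&h2&_). intro H. exact (h2 x (proj1 (h1 _ _ H)) H). Qed.
Lemma lt_trans x y z : ltL M L x y -> ltL M L y z -> ltL M L x z.
Proof. destruct Hwo as (_&_&h&_). apply h. Qed.
Lemma le_trans x y z : leL M L x y -> leL M L y z -> leL M L x z.
Proof. unfold leL. intros [H1| ->] [H2| ->]; auto. left; eapply lt_trans; eauto. Qed.
Lemma lt_le_lt x y z : ltL M L x y -> leL M L y z -> ltL M L x z.
Proof. intros H1 [H2| ->]; auto. eapply lt_trans; eauto. Qed.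
Lemma le_field x lam : inField M L lam -> leL M L x lam -> inField M L x.
Proof. intros H [H1| ->]; auto. eapply lt_fieldl; eauto. Qed.

Lemma wo_ind lam f e ps (P : N M -> Prop) :
  (forall xi, feval M (scons xi e) (setenv M ps) f <-> P xi) ->
  (forall xi, inField M L xi -> leL M L xi lam -> (forall eta, ltL M L eta xi -> P eta) -> P xi) ->
  forall xi, inField M L xi -> leL M L xi lam -> P xi.
Proof.
  intros HP Hstep xi Hf Hle. apply NNPP; intro nP.
  destruct (qcomp (fNeg f) e ps) as [Z HZ].
  destruct Hwo as (_&_&_&_&hl).
  destruct (hl Z) as [x0 [Hx0 [HZx0 Hmin]]].
  { exists xi. split; auto. apply HZ. simpl. rewrite HP. exact nP. }
  apply HZ in HZx0. simpl in HZx0. rewrite HP in HZx0. apply HZx0.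
  apply Hstep; auto.
  - eapply le_trans; [|exact Hle]. apply Hmin; auto. apply HZ. simpl. rewrite HP. exact nP.
  - intros eta Heta. apply NNPP; intro nPe.
    assert (Hle2 : leL M L x0 eta).
    { apply Hmin. eapply lt_fieldl; eauto. apply HZ. simpl. rewrite HP. exact nPe. }
    apply (lt_irr eta). eapply lt_le_lt; eauto.
Qed.
End WO.

Lemma phiE_ext phi e ps x (P P' : N M -> Prop) : (forall t, P t <-> P' t) ->
  (phiE M phi e ps x P <-> phiE M phi e ps x P').
Proof.
  intro H. unfold phiE. apply feval_ext; [reflexivity|].
  intros [|i] n; simpl; [apply H|tauto].
Qed.

Lemma restr_eq L xi Y Y' : (forall eta, ltL M L eta xi -> forall x, slice M Y eta x <-> slice M Y' eta x) ->
  forall t, restr M L xi Y t <-> restr M L xi Y' t.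
Proof.
  assert (K : forall Y Y', (forall eta, ltL M L eta xi -> forall x, slice M Y eta x <-> slice M Y' eta x) ->
     forall t, restr M L xi Y t -> restr M L xi Y' t).
  { intros Y1 Y2 H t [[a [b [Hp Hl]]] Ht]. split; [exists a, b; auto|].
    assert (Hs : slice M Y1 a b) by (exists t; auto).
    apply (H a Hl) in Hs. destruct Hs as [c [Hc Hc2]].
    rewrite (pair_fun _ _ _ _ Hp Hc). exact Hc2. }
  intros H t; split; apply K; auto. intros; symmetry; auto.
Qed.

Lemma TR_down phi e ps L lam a Y : wo M L -> TR M phi e ps L lam Y -> leL M L a lam -> TR M phi e ps L a Y.
Proof. intros Hwo H Ha xi Hxi. apply H. eapply le_trans; eauto. Qed.

Lemma TR_uniq phi e ps L a Y Y' : wo M L -> inField M L a ->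
  TR M phi e ps L a Y -> TR M phi e ps L a Y' ->
  forall xi, leL M L xi a -> forall x, slice M Y xi x <-> slice M Y' xi x.
Proof.
  intros Hwo Ha HY HY' xi Hxi. pose proof (le_field L Hwo xi a Ha Hxi) as Hf. revert xi Hf Hxi.
  apply (wo_ind L Hwo a (fAll (fiff (fslice 0 (tvar 1) (tvar 0)) (fslice 1 (tvar 1) (tvar 0))))
    e0 (scons Y (scons Y' ps0)) (fun z => forall x, slice M Y z x <-> slice M Y' z x)).
  - intro z. change (feval M (scons z e0) ?s (fAll ?g)) with (forall x, feval M (scons x (scons z e0)) s g).
    split; intros H x; specialize (H x);
      rewrite fiff_ok, !fslice_ok in *; exact H.
  - intros z Hz Hza IH x. rewrite (HY z Hza), (HY' z Hza).
    apply phiE_ext, restr_eq. exact IH.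
Qed.

Lemma TR_uniq_restr phi e ps L a Y Y' : wo M L -> inField M L a ->
  TR M phi e ps L a Y -> TR M phi e ps L a Y' ->
  forall t, restr M L a Y t <-> restr M L a Y' t.
Proof.
  intros Hwo Ha HY HY'. apply restr_eq. intros eta Heta.
  eapply TR_uniq; eauto. left; exact Heta.
Qed.


Lemma trans0_ok phi e ps X L z x :
  feval M (scons x (scons z e)) (setenv M (scons X (scons L ps))) (trans 0 phi) <->
  phiE M phi e ps x (restr M L z X).
Proof.
  rewrite (feval_ext _ _ (ins 0 z (scons x e)) _ (setenv M (scons X (scons L ps)))).
  - apply trans_ok.
  - intros [|[|i]]; reflexivity.
  - tauto.
Qed.
End Arith.

Theorem mainTheorem14 (phi : form) :
  forall (M : structure), is_ACA0 M ->
  forall (e : nat -> N M) (ps : nat -> St M) (L X : St M),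
    wo M L ->
    forall lam : N M, inField M L lam ->
      (hatTR M phi e ps L lam X <-> TR M phi e ps L lam X).
Proof.
  intros M HM e ps L X Hwo lam Hlam. split.
  - intro H.
    assert (Main : forall xi, inField M L xi -> leL M L xi lam ->
      forall x, slice M X xi x <-> phiE M phi e ps x (restr M L xi X)).
    { apply (wo_ind M HM L Hwo lam (fAll (fiff (fslice 0 (tvar 1) (tvar 0)) (trans 0 phi)))
        e (scons X (scons L ps)) (fun xi => forall x, slice M X xi x <-> phiE M phi e ps x (restr M L xi X))).
      - intro z. change (feval M (scons z e) ?s (fAll ?g)) with (forall x, feval M (scons x (scons z e)) s g).
        split; intros Hz x; specialize (Hz x);
          rewrite fiff_ok, fslice_ok, trans0_ok in *; exact Hz.
      - intros xi Hf Hle IH.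
        destruct (qcomp M HM (frestr 0 1 (tvar 0) (tvar 1)) (scons xi e) (scons X (scons L ps))) as [Z0 HZ0].
        assert (HZ0' : forall t, mem M t Z0 <-> restr M L xi X t).
        { intro t. rewrite HZ0, frestr_ok. reflexivity. }
        destruct (qcomp M HM phi e (scons Z0 ps)) as [W HW].
        assert (HW' : forall y, mem M y W <-> phiE M phi e ps y (restr M L xi X)).
        { intro y. rewrite HW. unfold phiE. apply feval_ext; [reflexivity|].
          intros [|i] n; unfold setenv; simpl; [apply HZ0'|tauto]. }
        destruct (qcomp M HM (fOr (frestr 0 1 (tvar 0) (tvar 1))
             (fEx (fAnd (fpair (tvar 2) (tvar 0) (tvar 1)) (fMem (tvar 0) 2))))
             (scons xi e) (scons X (scons L (scons W ps)))) as [Y HY].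
        assert (HY' : forall t, mem M t Y <-> restr M L xi X t \/ exists y, pairR M xi y t /\ mem M y W).
        { intro t. rewrite HY.
          change (feval M (scons t (scons xi e)) ?s (fOr ?A ?B)) with
            (feval M (scons t (scons xi e)) s A \/ feval M (scons t (scons xi e)) s B).
          rewrite frestr_ok. reflexivity. }
        assert (memYX : forall t a b, pairR M a b t -> ltL M L a xi -> (mem M t Y <-> mem M t X)).
        { intros t a b Hp Ha. rewrite HY'. split.
          - intros [[_ Ht] | [y [Hy _]]]; auto.
            destruct (pair_inj M HM L _ _ _ _ _ Hp Hy) as [-> _]. exfalso; eapply lt_irr; eauto.
          - intro Ht. left. split; auto. exists a, b; auto. }
        assert (R1 : forall eta, leL M L eta xi -> forall t, restr M L eta Y t <-> restr M L eta X t).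
        { intros eta Heta t. unfold restr. split; intros [[a [b [Hp Ha]]] Ht]; (split; [exists a, b; auto|]).
          - rewrite <- (memYX t a b); auto. eapply lt_le_lt; eauto.
          - rewrite (memYX t a b); auto. eapply lt_le_lt; eauto. }
        assert (TRY : TR M phi e ps L xi Y).
        { intros eta Heta x. destruct Heta as [Hlt | ->].
          - assert (Hs : slice M Y eta x <-> slice M X eta x).
            { unfold slice. split; intros [c [Hc Hm]]; exists c; split; auto.
              - rewrite <- (memYX c eta x); auto.
              - rewrite (memYX c eta x); auto. }
            rewrite Hs, (IH eta Hlt x). apply phiE_ext. intro t; symmetry; apply R1. left; auto.
          - transitivity (mem M x W).
            + split.
              * intros [c [Hc Hm]]. apply HY' in Hm.
                destruct Hm as [[[a [b [Hp Ha]]] _] | [y [Hy HyW]]].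
                -- destruct (pair_inj M HM L _ _ _ _ _ Hp Hc) as [-> _]. exfalso. eapply lt_irr; eauto.
                -- destruct (pair_inj M HM L _ _ _ _ _ Hy Hc) as [_ ->]. exact HyW.
              * intro Hx. destruct (pair_ex M HM L xi x) as [c Hc]. exists c. split; auto.
                apply HY'. right. exists x; auto.
            + rewrite HW'. apply phiE_ext. intro t; symmetry; apply R1. right; reflexivity. }
        intro x. destruct (pair_ex M HM L xi x) as [c Hc].
        assert (Hsc : slice M X xi x <-> mem M c X).
        { split.
          - intros [c' [Hc' Hm]]. rewrite (pair_fun M HM L _ _ _ _ Hc Hc'). exact Hm.
          - intro Hm; exists c; auto. }
        rewrite Hsc, (H c xi x Hc Hle). split.
        + intro HA. specialize (HA Y TRY).
          apply (proj1 (phiE_ext M phi e ps x _ _ (R1 xi (or_intror eq_refl)))). exact HA.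
        + intros HP Y' HY2.
          refine (proj1 (phiE_ext M phi e ps x (restr M L xi X) _ _) HP).
          intro t. rewrite <- (R1 xi (or_intror eq_refl)).
          apply (TR_uniq_restr M HM L phi e ps L xi Y Y'); auto. }
    intros xi Hxi. apply Main; auto. eapply le_field; eauto.
  - intros HT x a b Hp Hle.
    assert (Ha : inField M L a) by (eapply le_field; eauto).
    assert (HTa : TR M phi e ps L a X) by (eapply TR_down; eauto).
    split.
    + intros Hx Y HY.
      assert (Hs : slice M X a b) by (exists x; auto).
      apply (HTa a (or_intror eq_refl)) in Hs.
      refine (proj1 (phiE_ext M phi e ps b _ _ _) Hs).
      apply (TR_uniq_restr M HM L phi e ps L a X Y); auto.
    + intro HA. specialize (HA X HTa).
      apply (HTa a (or_intror eq_refl)) in HA. destruct HA as [c [Hc Hm]].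
      rewrite (pair_fun M HM L _ _ _ _ Hp Hc). exact Hm.
Qed.
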